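(* Consider a finite discounted MDP with rewards in $[0,1]$ and an initial state distribution $\mu$ with $\min_s\mu(s)>0$, and run the on-policy stochastic natural policy gradient algorithm described in the context with constant learning rate $\eta>0$. Then for all $t\ge1$: $V^{\pi_{\theta_{t+1}}}(s_0) - V^{\pi_{\theta_t}}(s_0)\ge 0$ almost surely for every $s_0\in\mathcal{S}$, and $$\mathbb{E}_t\left[V^{\pi_{\theta_{t+1}}}(\mu)\right] - V^{\pi_{\theta_t}}(\mu) \ge \frac{\eta(1-\gamma)^4\min_s\mu(s)}{1+\eta}\cdot\left\|\frac{d_\mu^{\pi^*}}{\mu}\right\|_\infty^{-1}\cdot\frac{\min_s\pi_{\theta_t}(a^*(s)\mid s)^2}{S}\cdot\left(V^{\pi^*}(\mu) - V^{\pi_{\theta_t}}(\mu)\right)^2,$$ where $\mathbb{E}_t$ is over the sampling $s_t\sim d_\mu^{\pi_{\theta_t}}(\cdot)$ and $a_t\sim\pi_{\theta_t}(\cdot\mid s_t)$ given $\theta_t$.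
   Context: A finite MDP is $(\mathcal{S},\mathcal{A},r,\mathcal{P},\gamma)$ with finite state and action sets, $S:=|\mathcal{S}|$, $r:\mathcal{S}\times\mathcal{A}\to[0,1]$, transition kernel $\mathcal{P}$, $\gamma\in[0,1)$. Softmax policy $\pi_\theta(a\mid s) = e^{\theta(s,a)}/\sum_{a'}e^{\theta(s,a')}$. $V^\pi(s) = \mathbb{E}[\sum_{t\ge0}\gamma^t r(s_t,a_t)\mid s_0=s]$, $Q^\pi(s,a) = r(s,a)+\gamma\sum_{s'}\mathcal{P}(s'\mid s,a)V^\pi(s')$, $V^\pi(\mu) = \mathbb{E}_{s\sim\mu}V^\pi(s)$, $d_\mu^\pi(s) = \mathbb{E}_{s_0\sim\mu}[(1-\gamma)\sum_{t\ge0}\gamma^t\Pr(s_t=s\mid s_0,\pi,\mathcal{P})]$. $\pi^*$ is an optimal deterministic policy with action $a^*(s)$ in state $s$. $\left\|\frac{d_\mu^{\pi^*}}{\mu}\right\|_\infty := \max_s d_\mu^{\pi^*}(s)/\mu(s)$. Algorithm: at iteration $t$, sample $s_t\sim d_\mu^{\pi_{\theta_t}}(\cdot)$, $a_t\sim\pi_{\theta_t}(\cdot\mid s_t)$, set $\theta_{t+1}(s_t,a_t) = \theta_t(s_t,a_t)+\eta\frac{Q^{\pi_{\theta_t}}(s_t,a_t)-V^{\pi_{\theta_t}}(s_t)}{\pi_{\theta_t}(a_t\mid s_t)}$, other coordinates unchanged. *)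

(* Defs.v *)
From HB Require Import structures.
From mathcomp Require Import all_boot all_order all_algebra.
From mathcomp Require Import all_classical all_reals all_analysis.
Set Implicit Arguments. Unset Strict Implicit. Unset Printing Implicit Defensive.
Import Order.TTheory GRing.Theory Num.Theory.
Local Open Scope ring_scope.

Section MDP.
Variables (R : realType) (S A : finType).
(* reward r, transition kernel P s a s' = P(s' | s, a), discount g *)
Variables (r : S -> A -> R) (P : S -> A -> S -> R) (g : R).

(* A (stochastic) policy is a function pol s a = pol(a | s). *)
Definition is_policy (pol : S -> A -> R) : Prop :=
  (forall s a, 0 <= pol s a) /\ (forall s, \sum_(a : A) pol s a = 1).

Definition softmax (theta : S -> A -> R) : S -> A -> R :=
  fun s a => expR (theta s a) / \sum_(a' : A) expR (theta s a').

Definition det_policy (astar : S -> A) : S -> A -> R :=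
  fun s a => (a == astar s)%:R.

Fixpoint state_prob (pol : S -> A -> R) (s0 : S) (t : nat) : S -> R :=
  match t with
  | 0 => fun s => (s == s0)%:R
  | t'.+1 => fun s' =>
      \sum_(s : S) \sum_(a : A) state_prob pol s0 t' s * pol s a * P s a s'
  end.

Definition V (pol : S -> A -> R) (s0 : S) : R :=
  limn (fun n => \sum_(0 <= t < n)
    g ^+ t * \sum_(s : S) \sum_(a : A) state_prob pol s0 t s * pol s a * r s a).

Definition Q (pol : S -> A -> R) (s : S) (a : A) : R :=
  r s a + g * \sum_(s' : S) P s a s' * V pol s'.

Definition Vmu (mu : S -> R) (pol : S -> A -> R) : R :=
  \sum_(s : S) mu s * V pol s.

Definition dvisit (mu : S -> R) (pol : S -> A -> R) (s : S) : R :=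
  \sum_(s0 : S) mu s0 * ((1 - g) *
     limn (fun n => \sum_(0 <= t < n) g ^+ t * state_prob pol s0 t s)).

Definition npg_update (eta : R) (theta : S -> A -> R) (st : S) (at_ : A)
  : S -> A -> R :=
  fun s a =>
    if (s == st) && (a == at_) then
      theta st at_ + eta * (Q (softmax theta) st at_ - V (softmax theta) st)
                           / softmax theta st at_
    else theta s a.

Definition expected_next_Vmu (mu : S -> R) (eta : R) (theta : S -> A -> R) : R :=
  \sum_(s : S) \sum_(a : A)
     dvisit mu (softmax theta) s * softmax theta s a
       * Vmu mu (softmax (npg_update eta theta s a)).

(* || d_mu^{pi*} / mu ||_oo  (all terms are positive, so 0 is a neutral seed) *)
Definition dist_mismatch (mu : S -> R) (astar : S -> A) : R :=
  \big[Num.max/0]_(s : S) (dvisit mu (det_policy astar) s / mu s).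

(* min_s mu(s)  (all mu s <= 1, so 1 is a neutral seed) *)
Definition min_mu (mu : S -> R) : R := \big[Num.min/1]_(s : S) mu s.

(* min_s pi_theta(a*(s) | s)  (probabilities are <= 1) *)
Definition min_opt_prob (theta : S -> A -> R) (astar : S -> A) : R :=
  \big[Num.min/1]_(s : S) softmax theta s (astar s).

End MDP.

Arguments det_policy {R S A} astar s a.

(* Main.v *)
Require Import Defs.
From HB Require Import structures.
From mathcomp Require Import all_boot all_order all_algebra.
From mathcomp Require Import all_classical all_reals all_analysis.
From mathcomp Require Import ring lra.
Import Order.TTheory GRing.Theory Num.Theory.
Import numFieldNormedType.Exports.
Local Open Scope classical_set_scope.
Local Open Scope ring_scope.

Section Arith.
Lemma arith_b (R : realType) (Ea Z y Adv eta k b : R) : 0 < Ea -> 0 < Z -> 0 <= Adv -> 0 < eta -> 0 < k -> k <= 1 -> k * Adv <= 1 -> eta * Adv * Z <= Ea * y -> b * (Z + Ea * y) = Ea * y * Adv -> eta * k * Adv ^+ 2 / (1 + eta) <= b.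
Proof.
move=> hE hZ hA he hk hk1 hkA hy hb.
set p := Ea * y in hy hb.
have hp : 0 <= p by apply: le_trans hy; rewrite !mulr_ge0 // ltW.
have hZp : 0 < Z + p by rewrite ltr_wpDr.
rewrite ler_pdivrMr; last by rewrite ltr_wpDr // ?ltW.
rewrite -(ler_pM2r hZp).
have -> : b * (1 + eta) * (Z + p) = (1 + eta) * (Ea * y * Adv) by rewrite -hb; ring.
have h1 : 0 <= Adv * (p - eta * Adv * Z) by rewrite mulr_ge0 // subr_ge0.
have h2 : 0 <= eta * Adv ^+ 2 * Z * (1 - k).
  by apply: mulr_ge0; [rewrite !mulr_ge0 ?exprn_ge0 // ltW | rewrite subr_ge0].
have h3 : 0 <= eta * p * Adv * (1 - k * Adv).
  by apply: mulr_ge0; [apply: mulr_ge0; [apply: mulr_ge0; [exact: ltW|exact: hp]|exact: hA] | rewrite subr_ge0].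
rewrite /p in h1 h3 *; lra.
Qed.

End Arith.

Section Dev.
Set Implicit Arguments.
Variables (R : realType) (S A : finType).
Variables (r : S -> A -> R) (P : S -> A -> S -> R) (g : R).
Hypothesis hr : forall s a, 0 <= r s a <= 1.
Hypothesis hP0 : forall s a s', 0 <= P s a s'.
Hypothesis hP1 : forall s a, \sum_(s' : S) P s a s' = 1.
Hypothesis hg : 0 <= g < 1.

Notation sp := (state_prob P).

Lemma sp_ge0 pol : is_policy pol -> forall s0 t s, 0 <= sp pol s0 t s.
Proof.
move=> [hp0 hp1] s0 t; elim: t => [|t IH] s /=; first by rewrite ler0n.
apply: sumr_ge0 => s1 _; apply: sumr_ge0 => a _.
by rewrite !mulr_ge0.
Qed.

Lemma sp_sum1 pol : is_policy pol -> forall s0 t, \sum_s sp pol s0 t s = 1.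
Proof.
move=> [hp0 hp1] s0; elim => [|t IH] /=.
  rewrite (bigD1 s0) //= eqxx big1 ?addr0 // => s /negPf ->; by [].
rewrite exchange_big /= -[RHS]IH; apply: eq_bigr => s _.
rewrite exchange_big /=.
transitivity (\sum_a sp pol s0 t s * pol s a).
  by apply: eq_bigr => a _; rewrite -mulr_sumr hP1 mulr1.
by rewrite -mulr_sumr hp1 mulr1.
Qed.

Lemma sp_le1 pol : is_policy pol -> forall s0 t s, sp pol s0 t s <= 1.
Proof.
move=> hp s0 t s; rewrite -(sp_sum1 hp s0 t) (bigD1 s) //= lerDl.
by apply: sumr_ge0 => *; exact: (sp_ge0 hp).
Qed.

Lemma sp_S pol s0 t s' : sp pol s0 t.+1 s' =
  \sum_s \sum_a sp pol s0 t s * pol s a * P s a s'.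
Proof. by []. Qed.

Lemma sp_back pol : forall t s0 s,
  sp pol s0 t.+1 s = \sum_a pol s0 a * \sum_s1 P s0 a s1 * sp pol s1 t s.
Proof.
elim => [|t IH] s0 s.
  rewrite /= (bigD1 s0) //= eqxx.
  rewrite [X in _ + X]big1 ?addr0; last first.
    move=> s1 Hs1; apply: big1 => a _; rewrite (negPf Hs1); by rewrite !mul0r.
  apply: eq_bigr => a _; rewrite mul1r; congr (_ * _).
  rewrite (bigD1 s) //= eqxx mulr1 big1 ?addr0 // => s1 Hs1.
  by rewrite eq_sym (negPf Hs1) mulr0.
rewrite sp_S.
under eq_bigr do under eq_bigr do rewrite IH.
transitivity (\sum_a0 pol s0 a0 * \sum_s1 P s0 a0 s1 *
   (\sum_s2 \sum_a sp pol s1 t s2 * pol s2 a * P s2 a s)); last first.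
  by [].
set F := fun a0 s1 s2 a => pol s0 a0 * P s0 a0 s1 * sp pol s1 t s2 * pol s2 a * P s2 a s.
transitivity (\sum_s2 \sum_a \sum_a0 \sum_s1 F a0 s1 s2 a).
  apply: eq_bigr => s2 _; apply: eq_bigr => a _.
  rewrite !mulr_suml; apply: eq_bigr => a0 _.
  rewrite mulr_sumr !mulr_suml; apply: eq_bigr => s1 _.
  by rewrite /F !mulrA.
transitivity (\sum_a0 \sum_s1 \sum_s2 \sum_a F a0 s1 s2 a); last first.
  apply: eq_bigr => a0 _; rewrite !mulr_sumr; apply: eq_bigr => s1 _.
  rewrite !mulr_sumr; apply: eq_bigr => s2 _.
  rewrite !mulr_sumr; apply: eq_bigr => a _.
  by rewrite /F !mulrA.
under eq_bigr => s2 _ do rewrite exchange_big.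
under eq_bigr => s2 _ do under eq_bigr => a0 _ do rewrite exchange_big.
rewrite exchange_big; apply: eq_bigr => a0 _.
by rewrite exchange_big.
Qed.


Lemma cvg_sumS (I : finType) (f : I -> nat -> R) (l : I -> R) :
  (forall i, f i n @[n --> \oo] --> l i) ->
  (\sum_i f i n) @[n --> \oo] --> \sum_i l i.
Proof.
move=> h; apply: (@cvg_big _ _ +%R 0 xpredT add_continuous) => //.
Qed.

Definition rpol pol s := \sum_a pol s a * r s a.
Definition cum pol (c : S -> R) s0 n :=
  \sum_(0 <= t < n) g ^+ t * \sum_s sp pol s0 t s * c s.

Lemma cum0 pol c s0 : cum pol c s0 0 = 0.
Proof. by rewrite /cum big_geq. Qed.

Lemma cumS pol c s0 n : cum pol c s0 n.+1 =
  cum pol c s0 n + g ^+ n * \sum_s sp pol s0 n s * c s.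
Proof. by rewrite /cum big_nat_recr. Qed.

Lemma sp0_sum (c : S -> R) s0 : \sum_s sp (fun _ _ => 0) s0 0 s * c s = c s0.
Proof.
rewrite (bigD1 s0) //= eqxx mul1r big1 ?addr0 // => s Hs.
by rewrite (negPf Hs) mul0r.
Qed.

Lemma sp0_sum' pol (c : S -> R) s0 : \sum_s sp pol s0 0 s * c s = c s0.
Proof. exact: sp0_sum. Qed.

Lemma spS_sum pol (W : S -> R) s0 n :
  \sum_s sp pol s0 n.+1 s * W s =
  \sum_s sp pol s0 n s * \sum_a pol s a * \sum_s' P s a s' * W s'.
Proof.
under eq_bigr do rewrite sp_S mulr_suml.
under eq_bigr do under eq_bigr do rewrite mulr_suml.
rewrite exchange_big; apply: eq_bigr => s _.
rewrite exchange_big [RHS]mulr_sumr; apply: eq_bigr => a _.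
rewrite mulrA [RHS]mulr_sumr; apply: eq_bigr => s' _.
by rewrite !mulrA.
Qed.

Lemma sol_identity pol c (W : S -> R)
  (hW : forall s, W s = c s + g * \sum_a pol s a * \sum_s' P s a s' * W s')
  s0 n : W s0 = cum pol c s0 n + g ^+ n * \sum_s sp pol s0 n s * W s.
Proof.
elim: n => [|n IH]; first by rewrite cum0 add0r expr0 mul1r sp0_sum'.
rewrite cumS IH -addrA; congr (_ + _).
rewrite spS_sum exprSr -mulrA -mulrDr; congr (_ * _).
rewrite mulr_sumr -big_split /=; apply: eq_bigr => s _.
by rewrite {1}hW mulrDr; congr (_ + _); rewrite mulrCA.
Qed.

Lemma gn_cvg0 : (fun n => g ^+ n) @ \oo --> (0 : R).
Proof.
apply: cvg_expr; case/andP: hg => g0 g1; by rewrite ger0_norm.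
Qed.

Lemma sol_cvg pol (hp : is_policy pol) c (W : S -> R)
  (hW : forall s, W s = c s + g * \sum_a pol s a * \sum_s' P s a s' * W s')
  s0 : cum pol c s0 n @[n --> \oo] --> W s0.
Proof.
have E : (fun n => cum pol c s0 n) =
   (fun n => W s0 - \sum_s (g ^+ n * sp pol s0 n s) * W s).
  apply: funext => n; rewrite (@sol_identity pol c W hW s0 n) mulr_sumr.
  rewrite [X in _ = _ + X - _](eq_bigr (fun s => g ^+ n * sp pol s0 n s * W s)).
    by rewrite addrK.
  by move=> s _; rewrite mulrA.
rewrite E.
suff H : (W s0 - \sum_s (g ^+ n * sp pol s0 n s) * W s) @[n --> \oo] --> W s0 - 0.
  by rewrite subr0 in H.
apply: cvgB; first exact: cvg_cst.
have H0 : \sum_(s : S) 0 * W s = 0 by rewrite big1 // => *; rewrite mul0r.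
rewrite -{2}H0.
apply: cvg_sumS => s; apply: cvgMr_tmp.
apply: (@squeeze_cvgr _ _ _ _ (fun _ => 0) (fun n => g ^+ n)).
- apply: nearW => n; case/andP: hg => g0 _.
  rewrite mulr_ge0 ?exprn_ge0 ?(sp_ge0 hp) //=.
  by rewrite ler_piMr ?exprn_ge0 ?(sp_le1 hp).
- exact: cvg_cst.
- exact: gn_cvg0.
Qed.

Lemma g0 : 0 <= g. Proof. by case/andP: hg. Qed.
Lemma g1 : 0 < 1 - g. Proof. by case/andP: hg => _; rewrite subr_gt0. Qed.

Lemma geom_le n : \sum_(0 <= t < n) g ^+ t <= (1 - g)^-1.
Proof.
have E : (\sum_(0 <= t < n) g ^+ t) * (1 - g) = 1 - g ^+ n.
  elim: n => [|n IH]; first by rewrite big_geq // mul0r expr0 subrr.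
  by rewrite big_nat_recr //= mulrDl IH exprS; ring.
rewrite -(ler_pM2r g1) E mulVf; last by rewrite gt_eqF // g1.
by rewrite gerBl exprn_ge0 // g0.
Qed.

Lemma cum_nd pol (hp : is_policy pol) c (c0 : forall s, 0 <= c s) s0 :
  {homo cum pol c s0 : n m / (n <= m)%N >-> n <= m}.
Proof.
apply/nondecreasing_seqP => n; rewrite cumS lerDl mulr_ge0 ?exprn_ge0 ?g0 //.
by apply: sumr_ge0 => s _; rewrite mulr_ge0 ?(sp_ge0 hp).
Qed.

Lemma cum_le pol (hp : is_policy pol) c (c0 : forall s, 0 <= c s)
  (c1 : forall s, c s <= 1) s0 n : cum pol c s0 n <= (1 - g)^-1.
Proof.
apply: le_trans (geom_le n); apply: ler_sum => t _.
rewrite -[leRHS]mulr1 ler_wpM2l ?exprn_ge0 ?g0 //.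
rewrite -(sp_sum1 hp s0 t); apply: ler_sum => s _.
by rewrite -[leRHS]mulr1 ler_wpM2l ?(sp_ge0 hp).
Qed.

Lemma cum_cvg pol (hp : is_policy pol) c (c0 : forall s, 0 <= c s)
  (c1 : forall s, c s <= 1) s0 : cvgn (cum pol c s0).
Proof.
apply: nondecreasing_is_cvgn; first exact: cum_nd.
by exists (1 - g)^-1 => _ [n _ <-]; exact: cum_le.
Qed.

Lemma cum_lim_ge pol (hp : is_policy pol) c (c0 : forall s, 0 <= c s)
  (c1 : forall s, c s <= 1) s0 n : cum pol c s0 n <= limn (cum pol c s0).
Proof. apply: nondecreasing_cvgn_le; [exact: cum_nd | exact: cum_cvg]. Qed.

Lemma cum_lim_le pol (hp : is_policy pol) c (c0 : forall s, 0 <= c s)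
  (c1 : forall s, c s <= 1) s0 : limn (cum pol c s0) <= (1 - g)^-1.
Proof.
apply: limr_le; first exact: cum_cvg.
by apply: nearW => n; exact: cum_le.
Qed.

Lemma rpol_ge0 pol (hp : is_policy pol) s : 0 <= rpol pol s.
Proof.
case: hp => hp0 _; apply: sumr_ge0 => a _; rewrite mulr_ge0 //.
by case/andP: (hr s a).
Qed.

Lemma rpol_le1 pol (hp : is_policy pol) s : rpol pol s <= 1.
Proof.
case: hp => hp0 hp1; rewrite -(hp1 s); apply: ler_sum => a _.
by rewrite -[leRHS]mulr1 ler_wpM2l //; case/andP: (hr s a).
Qed.

Lemma V_cum pol s0 : V r P g pol s0 = limn (cum pol (rpol pol) s0).
Proof.
rewrite /V /cum; congr (lim (_ @ \oo)); apply: funext => n.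
apply: eq_bigr => t _; congr (_ * _); apply: eq_bigr => s _.
by rewrite /rpol mulr_sumr; apply: eq_bigr => a _; rewrite mulrA.
Qed.

Lemma spback_sum pol (c : S -> R) s0 t :
  \sum_s sp pol s0 t.+1 s * c s =
  \sum_a pol s0 a * \sum_s1 P s0 a s1 * \sum_s sp pol s1 t s * c s.
Proof.
under eq_bigr do rewrite sp_back mulr_suml.
rewrite exchange_big; apply: eq_bigr => a _.
under eq_bigr do rewrite mulrAC mulr_sumr.
rewrite exchange_big [RHS]mulr_sumr; apply: eq_bigr => s1 _.
rewrite mulrA [RHS]mulr_sumr; apply: eq_bigr => s _.
ring.
Qed.

Lemma cum_back pol c s0 n : cum pol c s0 n.+1 =
  c s0 + g * \sum_a pol s0 a * \sum_s1 P s0 a s1 * cum pol c s1 n.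
Proof.
rewrite /cum big_nat_recl // expr0 mul1r sp0_sum'; congr (_ + _).
transitivity (\sum_(0 <= t < n) \sum_a \sum_s1 g ^+ t.+1 * pol s0 a *
   P s0 a s1 * (\sum_s sp pol s1 t s * c s)).
  apply: eq_bigr => t _; rewrite spback_sum mulr_sumr; apply: eq_bigr => a _.
  rewrite mulrA mulr_sumr; apply: eq_bigr => s1 _; by rewrite !mulrA.
rewrite exchange_big; under eq_bigr do rewrite exchange_big.
rewrite mulr_sumr; apply: eq_bigr => a _.
rewrite mulrA mulr_sumr; apply: eq_bigr => s1 _.
rewrite mulrA mulr_sumr; apply: eq_bigr => t _.
rewrite exprS; ring.
Qed.

Lemma V_bellman pol (hp : is_policy pol) s0 : V r P g pol s0 =
  rpol pol s0 + g * \sum_a pol s0 a * \sum_s1 P s0 a s1 * V r P g pol s1.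
Proof.
have cv (s : S) := @cum_cvg pol hp (rpol pol) (rpol_ge0 hp) (rpol_le1 hp) s.
have H : (fun n => cum pol (rpol pol) s0 n.+1) @ \oo -->
   rpol pol s0 + g * \sum_a pol s0 a * \sum_s1 P s0 a s1 * V r P g pol s1.
  under eq_cvg do rewrite cum_back.
  apply: cvgD; first exact: cvg_cst.
  apply: cvgMl_tmp; apply: cvg_sumS => a; apply: cvgMl_tmp.
  apply: cvg_sumS => s1; apply: cvgMl_tmp; rewrite V_cum; exact: cv.
rewrite cvg_shiftS in H.
by rewrite V_cum; apply: cvg_lim.
Qed.

Definition occ pol s0 s :=
  limn (fun n => \sum_(0 <= t < n) g ^+ t * sp pol s0 t s).

Lemma occ_cum pol s0 s :
  (fun n => \sum_(0 <= t < n) g ^+ t * sp pol s0 t s) =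
  cum pol (fun s' => (s' == s)%:R) s0.
Proof.
apply: funext => n; apply: eq_bigr => t _; congr (_ * _).
rewrite (bigD1 s) //= eqxx mulr1 big1 ?addr0 // => s' Hs'.
by rewrite (negPf Hs') mulr0.
Qed.

Lemma ind_ge0 (b : bool) : 0 <= (b%:R : R). Proof. by case: b. Qed.
Lemma ind_le1 (b : bool) : (b%:R : R) <= 1. Proof. by case: b. Qed.

Lemma occ_cvg pol (hp : is_policy pol) s0 s :
  (fun n => \sum_(0 <= t < n) g ^+ t * sp pol s0 t s) @ \oo --> occ pol s0 s.
Proof.
rewrite /occ occ_cum.
exact: (@cum_cvg pol hp _ (fun s' => ind_ge0 _) (fun s' => ind_le1 _)).
Qed.

Lemma occ_ge0 pol (hp : is_policy pol) s0 s : 0 <= occ pol s0 s.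
Proof.
rewrite /occ occ_cum; apply: le_trans
  (@cum_lim_ge pol hp _ (fun s' => ind_ge0 _) (fun s' => ind_le1 _) s0 0).
by rewrite cum0.
Qed.

Lemma occ_self pol (hp : is_policy pol) s : 1 <= occ pol s s.
Proof.
rewrite /occ occ_cum; apply: le_trans
  (@cum_lim_ge pol hp _ (fun s' => ind_ge0 _) (fun s' => ind_le1 _) s 1).
by rewrite cumS cum0 add0r expr0 mul1r sp0_sum' eqxx.
Qed.

Lemma cum_occ pol c s0 n : cum pol c s0 n =
  \sum_s (\sum_(0 <= t < n) g ^+ t * sp pol s0 t s) * c s.
Proof.
rewrite /cum; under eq_bigr do rewrite mulr_sumr.
rewrite exchange_big; apply: eq_bigr => s _.
by rewrite mulr_suml; apply: eq_bigr => t _; rewrite mulrA.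
Qed.

Lemma cum_lim_occ pol (hp : is_policy pol) c s0 :
  cum pol c s0 n @[n --> \oo] --> \sum_s occ pol s0 s * c s.
Proof.
under eq_cvg do rewrite cum_occ.
apply: cvg_sumS => s; apply: cvgMr_tmp; exact: occ_cvg.
Qed.

Lemma occ_sum pol (hp : is_policy pol) s0 : \sum_s occ pol s0 s = (1 - g)^-1.
Proof.
have H1 := @cum_lim_occ pol hp (fun _ => 1) s0.
have H2 : cum pol (fun _ => 1) s0 n @[n --> \oo] --> (fun _ : S => (1 - g)^-1) s0.
  apply: (sol_cvg hp) => s.
  case: hp => hp0 hp1.
  have -> : \sum_a pol s a * \sum_s' P s a s' * (1 - g)^-1 = (1 - g)^-1.
    rewrite -[RHS]mul1r -(hp1 s) mulr_suml; apply: eq_bigr => a _.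
    by rewrite -mulr_suml hP1 mul1r.
  have : 1 - g != 0 by rewrite gt_eqF // g1.
  move=> h; field.
  by [].
have E : \sum_s occ pol s0 s * 1 = \sum_s occ pol s0 s.
  by apply: eq_bigr => *; rewrite mulr1.
rewrite -E; exact: (cvg_unique _ H1 H2).
Qed.

Lemma V_ge0 pol (hp : is_policy pol) s : 0 <= V r P g pol s.
Proof.
rewrite V_cum; apply: le_trans
  (@cum_lim_ge pol hp _ (rpol_ge0 hp) (rpol_le1 hp) s 0).
by rewrite cum0.
Qed.

Lemma V_le pol (hp : is_policy pol) s : V r P g pol s <= (1 - g)^-1.
Proof. rewrite V_cum; exact: (@cum_lim_le pol hp _ (rpol_ge0 hp) (rpol_le1 hp)). Qed.

Lemma V_Q pol (hp : is_policy pol) s :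
  V r P g pol s = \sum_a pol s a * Q r P g pol s a.
Proof.
rewrite (V_bellman hp) /rpol /Q mulr_sumr -big_split /=.
by apply: eq_bigr => a _; ring.
Qed.

Lemma pdl pol pol' (hp : is_policy pol) (hp' : is_policy pol') s0 :
  V r P g pol' s0 - V r P g pol s0 =
  \sum_s occ pol' s0 s *
    (\sum_a pol' s a * Q r P g pol s a - V r P g pol s).
Proof.
set b := fun s => \sum_a pol' s a * Q r P g pol s a - V r P g pol s.
set W := fun s => V r P g pol' s - V r P g pol s.
have hW : forall s, W s = b s + g * \sum_a pol' s a * \sum_s' P s a s' * W s'.
  move=> s; rewrite /W /b (V_bellman hp' s) /rpol /Q.
  have e1 : \sum_a pol' s a * (r s a + g * \sum_s' P s a s' * V r P g pol s')
     = \sum_a pol' s a * r s a + g * \sum_a pol' s a * \sum_s' P s a s' * V r P g pol s'.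
    by rewrite mulr_sumr -big_split /=; apply: eq_bigr => a _; ring.
  have e2 : \sum_a pol' s a * \sum_s' P s a s' * (V r P g pol' s' - V r P g pol s')
     = \sum_a pol' s a * \sum_s' P s a s' * V r P g pol' s'
       - \sum_a pol' s a * \sum_s' P s a s' * V r P g pol s'.
    rewrite -sumrB; apply: eq_bigr => a _; rewrite -mulrBr -sumrB.
    by congr (_ * _); apply: eq_bigr => s' _; rewrite mulrBr.
  rewrite e1 e2; ring.
have H1 := @sol_cvg pol' hp' b W hW s0.
have H2 := @cum_lim_occ pol' hp' b s0.
exact: (cvg_unique _ H1 H2).
Qed.

Variable a0 : A.

Lemma sumexp_gt0 (th : S -> A -> R) s : 0 < \sum_a expR (th s a).
Proof.
rewrite (bigD1 a0) //=; apply: (@lt_le_trans _ _ (expR (th s a0))).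
  exact: expR_gt0.
by rewrite lerDl; apply: sumr_ge0 => *; exact: expR_ge0.
Qed.

Lemma softmax_pol (th : S -> A -> R) : is_policy (softmax th).
Proof.
split=> [s a|s]; first by rewrite /softmax divr_ge0 // ?expR_ge0 // ltW // sumexp_gt0.
rewrite /softmax -mulr_suml mulfV //; exact/lt0r_neq0/sumexp_gt0.
Qed.

Lemma softmax_gt0 (th : S -> A -> R) s a : 0 < softmax th s a.
Proof. by rewrite /softmax divr_gt0 ?expR_gt0 ?sumexp_gt0. Qed.

Lemma det_pol (astar : S -> A) : is_policy (det_policy astar : S -> A -> R).
Proof.
split=> [s a|s]; first exact: ind_ge0.
rewrite /det_policy (bigD1 (astar s)) //= eqxx big1 ?addr0 // => a Ha.
by rewrite (negPf Ha).
Qed.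

Lemma sum_det (astar : S -> A) s (F : A -> R) :
  \sum_a det_policy astar s a * F a = F (astar s).
Proof.
rewrite /det_policy (bigD1 (astar s)) //= eqxx mul1r big1 ?addr0 // => a Ha.
by rewrite (negPf Ha) mul0r.
Qed.

Definition Adv th s a := Q r P g (softmax th) s a - V r P g (softmax th) s.
Definition bcoef (pol' pol : S -> A -> R) s :=
  \sum_a pol' s a * Q r P g pol s a - V r P g pol s.

Lemma bcoef_same pol (hp : is_policy pol) s : bcoef pol pol s = 0.
Proof. by rewrite /bcoef -V_Q // subrr. Qed.

Lemma pdl1 pol pol' (hp : is_policy pol) (hp' : is_policy pol') s
  (hsame : forall s', s' != s -> pol' s' = pol s') s0 :
  V r P g pol' s0 - V r P g pol s0 = occ pol' s0 s * bcoef pol' pol s.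
Proof.
rewrite (pdl hp hp') (bigD1 s) //= [X in _ + X]big1 ?addr0 // => s' Hs'.
have -> : (\sum_a pol' s' a * Q r P g pol s' a - V r P g pol s') = bcoef pol pol s'.
  by rewrite /bcoef (hsame _ Hs').
by rewrite bcoef_same // mulr0.
Qed.

Lemma Vmu_diff1 (mu : S -> R) pol pol' (hp : is_policy pol) (hp' : is_policy pol') s
  (hsame : forall s', s' != s -> pol' s' = pol s') :
  Vmu r P g mu pol' - Vmu r P g mu pol =
  (1 - g)^-1 * dvisit P g mu pol' s * bcoef pol' pol s.
Proof.
rewrite /Vmu -sumrB.
under eq_bigr do rewrite -mulrBr (@pdl1 pol pol' hp hp' s hsame).
rewrite /dvisit -/(occ _ _ _) mulr_sumr mulr_suml; apply: eq_bigr => s0 _.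
rewrite -/(occ _ _ _).
have : 1 - g != 0 by rewrite gt_eqF // g1.
move=> h; field.
by [].
Qed.

Lemma dvisit_occ (mu : S -> R) pol s :
  dvisit P g mu pol s = \sum_s0 mu s0 * ((1 - g) * occ pol s0 s).
Proof. by []. Qed.

Lemma dvisit_ge (mu : S -> R) (mu0 : forall s, 0 < mu s) pol (hp : is_policy pol) s :
  (1 - g) * mu s <= dvisit P g mu pol s.
Proof.
rewrite dvisit_occ (bigD1 s) //=.
have h1 : (1 - g) * mu s <= mu s * ((1 - g) * occ pol s s).
  rewrite mulrC; apply: ler_wpM2l; first exact: ltW.
  rewrite -[X in X <= _]mulr1; apply: ler_wpM2l; first exact: ltW g1.
  exact: occ_self.
have h2 : 0 <= \sum_(s0 | s0 != s) mu s0 * ((1 - g) * occ pol s0 s).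
  apply: sumr_ge0 => s0 _; apply: mulr_ge0; first exact: ltW.
  by apply: mulr_ge0; [exact: ltW g1 | exact: occ_ge0].
lra.
Qed.

Lemma dvisit_ge0 (mu : S -> R) (mu0 : forall s, 0 < mu s) pol (hp : is_policy pol) s :
  0 <= dvisit P g mu pol s.
Proof.
apply: le_trans (@dvisit_ge mu mu0 pol hp s).
by apply: mulr_ge0; [exact: ltW g1 | exact: ltW].
Qed.

Lemma dvisit_sum (mu : S -> R) (hmu : \sum_s mu s = 1) pol (hp : is_policy pol) :
  \sum_s dvisit P g mu pol s = 1.
Proof.
rewrite /dvisit exchange_big /= -[RHS]hmu; apply: eq_bigr => s0 _.
rewrite -mulr_sumr -mulr_sumr -/(occ _ _ _).
under eq_bigr do rewrite -/(occ _ _ _).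
rewrite occ_sum // mulfV ?mulr1 //; by rewrite gt_eqF // g1.
Qed.

Lemma Q_le pol (hp : is_policy pol) s a : Q r P g pol s a <= (1 - g)^-1.
Proof.
rewrite /Q.
have h1 : \sum_s' P s a s' * V r P g pol s' <= (1 - g)^-1.
  have E : \sum_s' P s a s' * (1 - g)^-1 = (1 - g)^-1 by rewrite -mulr_suml hP1 mul1r.
  rewrite -[leRHS]E; apply: ler_sum => s' _.
  by apply: ler_wpM2l; [exact: hP0 | exact: (V_le hp)].
have h2 : r s a <= 1 by case/andP: (hr s a).
have hk := g1; have hg0 := g0.
have e : (1 - g)^-1 = 1 + g * (1 - g)^-1.
  have : 1 - g != 0 by rewrite gt_eqF.
  by move=> h; field.
rewrite e lerD //; exact: ler_wpM2l.
Qed.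

Lemma Adv_le th s a : Adv th s a <= (1 - g)^-1.
Proof.
rewrite /Adv; have := Q_le (softmax_pol th) s a.
have := V_ge0 (softmax_pol th) s; lra.
Qed.

Lemma npg_same eta th s a s' : s' != s ->
  softmax (npg_update r P g eta th s a) s' = softmax th s'.
Proof.
move=> Hs'; apply: funext => a'; rewrite /softmax /npg_update (negPf Hs') /=.
by [].
Qed.

Definition npg_delta eta th s a :=
  eta * (Q r P g (softmax th) s a - V r P g (softmax th) s) / softmax th s a.

Lemma npg_row eta th s a a' : npg_update r P g eta th s a s a' =
  th s a' + (a' == a)%:R * npg_delta eta th s a.
Proof.
rewrite /npg_update eqxx /=; case: eqP => [->|_]; first by rewrite mul1r.
by rewrite mul0r addr0.
Qed.

Lemma npg_bZ eta th s a :
  bcoef (softmax (npg_update r P g eta th s a)) (softmax th) s *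
    \sum_a' expR (npg_update r P g eta th s a s a') =
  expR (th s a) * (expR (npg_delta eta th s a) - 1) * Adv th s a.
Proof.
set th' := npg_update r P g eta th s a.
set x := expR (npg_delta eta th s a).
set E := fun a' => expR (th s a').
set Qf := fun a' => Q r P g (softmax th) s a'.
set Z := \sum_a' E a'.
set ZR := \sum_(a' | a' != a) E a'.
set QR := \sum_(a' | a' != a) E a' * Qf a'.
have hZ : Z = E a + ZR by rewrite /Z (bigD1 a).
have hZ' : \sum_a' expR (th' s a') = E a * x + ZR.
  rewrite (bigD1 a) //= /th' npg_row eqxx mul1r expRD; congr (_ + _).
  by apply: eq_bigr => a' Ha'; rewrite npg_row (negPf Ha') mul0r addr0.
have hV : V r P g (softmax th) s = (E a * Qf a + QR) / Z.
  rewrite V_Q; last exact: softmax_pol.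
  rewrite (bigD1 a) //= mulrDl; congr (_ + _).
    by rewrite /softmax /Qf /E /Z mulrAC.
  rewrite /QR mulr_suml; apply: eq_bigr => a' _.
  by rewrite /softmax /Qf /E /Z mulrAC.
have hS : \sum_a' softmax th' s a' * Qf a' = (E a * x * Qf a + QR) / (E a * x + ZR).
  rewrite (bigD1 a) //= mulrDl; congr (_ + _).
    rewrite /softmax hZ' /th' npg_row eqxx mul1r expRD mulrAC //.
  rewrite /QR mulr_suml; apply: eq_bigr => a' Ha'.
  rewrite /softmax hZ' /th' npg_row (negPf Ha') mul0r addr0 mulrAC //.
have Zpos : 0 < Z by exact: sumexp_gt0.
have Z'pos : 0 < E a * x + ZR by rewrite -hZ'; exact: sumexp_gt0.
rewrite /bcoef -/Qf hS hZ' /Adv -/(Qf a) hV.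
have hZ0 : Z != 0 by rewrite gt_eqF.
have hZ'0 : E a * x + ZR != 0 by rewrite gt_eqF.
rewrite hZ in hZ0 *.
change (expR (th s a)) with (E a).
clear hV hS hZ' Z'pos Zpos hZ.
move: (E a) (Qf a) x ZR QR hZ0 hZ'0 => ea qa xx zr qr h1 h2.
by field; rewrite h1 h2.
Qed.

Lemma npg_Z eta th s a :
  \sum_a' expR (npg_update r P g eta th s a s a') =
  \sum_a' expR (th s a') + expR (th s a) * (expR (npg_delta eta th s a) - 1).
Proof.
rewrite (bigD1 a) //= [in RHS](bigD1 a) //= npg_row eqxx mul1r expRD.
have -> : \sum_(a' | a' != a) expR (npg_update r P g eta th s a s a') =
          \sum_(a' | a' != a) expR (th s a').
  by apply: eq_bigr => a' Ha'; rewrite npg_row (negPf Ha') mul0r addr0.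
ring.
Qed.

Lemma npg_delta_Adv eta th s a :
  npg_delta eta th s a = eta * Adv th s a / softmax th s a.
Proof. by []. Qed.

Lemma npg_b_ge0 eta th s a : 0 < eta ->
  0 <= bcoef (softmax (npg_update r P g eta th s a)) (softmax th) s.
Proof.
move=> he.
have hZ := sumexp_gt0 (npg_update r P g eta th s a) s.
have hb := npg_bZ eta th s a.
have -> : bcoef (softmax (npg_update r P g eta th s a)) (softmax th) s =
  expR (th s a) * (expR (npg_delta eta th s a) - 1) * Adv th s a /
  \sum_a' expR (npg_update r P g eta th s a s a').
  by rewrite -hb mulfK // gt_eqF.
apply: divr_ge0; last exact: ltW.
rewrite -mulrA; apply: mulr_ge0; first exact: expR_ge0.
have hpi := softmax_gt0 th s a.
case: (lerP 0 (Adv th s a)) => hA.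
  apply: mulr_ge0 => //; rewrite subr_ge0.
  apply: le_trans (expR_ge1Dx _); rewrite lerDl npg_delta_Adv.
  by apply: divr_ge0; [apply: mulr_ge0; [exact: ltW|] | exact: ltW].
apply: mulr_le0.
  rewrite subr_le0 -expR0 ler_expR npg_delta_Adv.
  apply: mulr_le0_ge0; last by rewrite invr_ge0 ltW.
  by apply: mulr_ge0_le0; [exact: ltW | exact: ltW].
exact: ltW.
Qed.

Lemma npg_b_lb eta th s a : 0 < eta -> 0 <= Adv th s a ->
  eta * (1 - g) * Adv th s a ^+ 2 / (1 + eta) <=
  bcoef (softmax (npg_update r P g eta th s a)) (softmax th) s.
Proof.
move=> he hA.
have hZ := sumexp_gt0 th s.
have hpi := softmax_gt0 th s a.
have hEa := expR_gt0 (th s a).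
apply: (@arith_b R (expR (th s a)) (\sum_a' expR (th s a'))
          (expR (npg_delta eta th s a) - 1)) => //.
- exact: g1.
- by rewrite gerBl g0.
- have := Adv_le th s a => h.
  have := g1 => h1.
  rewrite -(ler_pM2l h1) in h.
  by rewrite mulfV ?gt_eqF in h.
- apply: le_trans (_ : expR (th s a) * npg_delta eta th s a <= _).
    rewrite npg_delta_Adv /softmax.
    have hZ0 : \sum_a' expR (th s a') != 0 by rewrite gt_eqF.
    have hE0 : expR (th s a) != 0 by rewrite gt_eqF.
    rewrite le_eqVlt; apply/orP; left; apply/eqP; field.
    by rewrite hZ0 hE0.
  apply: ler_wpM2l; first exact: ltW.
  by have := expR_ge1Dx (npg_delta eta th s a); lra.
- by rewrite -npg_bZ npg_Z.
Qed.

Lemma cs_sum (x : S -> R) : (\sum_s x s) ^+ 2 <= #|S|%:R * \sum_s x s ^+ 2.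
Proof.
have H : 0 <= \sum_i \sum_j (x i - x j) ^+ 2.
  by apply: sumr_ge0 => i _; apply: sumr_ge0 => j _; exact: sqr_ge0.
have E1 : \sum_(i : S) \sum_(j : S) x i ^+ 2 = #|S|%:R * \sum_s x s ^+ 2.
  rewrite mulr_sumr; apply: eq_bigr => i _; rewrite sumr_const mulr_natl.
  by [].
have E2 : \sum_(i : S) \sum_(j : S) x j ^+ 2 = #|S|%:R * \sum_s x s ^+ 2.
  by rewrite sumr_const mulr_natl.
have E3 : \sum_(i : S) \sum_(j : S) x i * x j = (\sum_s x s) ^+ 2.
  rewrite expr2 mulr_suml; apply: eq_bigr => i _; by rewrite mulr_sumr.
have E : \sum_i \sum_j (x i - x j) ^+ 2 =
   \sum_(i : S) \sum_(j : S) x i ^+ 2 + \sum_(i : S) \sum_(j : S) x j ^+ 2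
   - 2 * \sum_(i : S) \sum_(j : S) x i * x j.
  rewrite mulr_sumr -big_split -sumrB /=; apply: eq_bigr => i _.
  rewrite mulr_sumr -big_split -sumrB /=; apply: eq_bigr => j _.
  ring.
rewrite E E1 E2 E3 in H; lra.
Qed.

Lemma min_le (F : S -> R) j : \big[Num.min/1]_s F s <= F j.
Proof. exact: bigmin_le. Qed.

Lemma min_ge0 (F : S -> R) : (forall s, 0 <= F s) -> 0 <= \big[Num.min/1]_s F s.
Proof.
move=> h; apply: (big_ind (fun x : R => 0 <= x)); first exact: ler01.
  by move=> x y hx hy; rewrite le_min hx hy.
by move=> i _; exact: h.
Qed.

Lemma min_le1 (F : S -> R) : (forall s, F s <= 1) -> \big[Num.min/1]_s F s <= 1.
Proof.
move=> h; apply: (big_ind (fun x : R => x <= 1)); first exact: lexx.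
  by move=> x y hx hy; rewrite ge_min hx.
by move=> i _; exact: h.
Qed.

Lemma max_ge (F : S -> R) j : F j <= \big[Num.max/0]_s F s.
Proof. exact: le_bigmax. Qed.

Lemma Vmu_diff (mu : S -> R) pol pol' (hp : is_policy pol) (hp' : is_policy pol') :
  Vmu r P g mu pol' - Vmu r P g mu pol =
  (1 - g)^-1 * \sum_s dvisit P g mu pol' s * bcoef pol' pol s.
Proof.
rewrite /Vmu -sumrB.
under eq_bigr do rewrite -mulrBr (pdl hp hp') mulr_sumr.
rewrite exchange_big mulr_sumr; apply: eq_bigr => s _.
rewrite dvisit_occ mulr_suml mulr_sumr; apply: eq_bigr => s0 _.
rewrite /bcoef.
have : 1 - g != 0 by rewrite gt_eqF // g1.
move=> h; field.
by [].
Qed.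

Lemma main_mono eta th s a s0 : 0 < eta ->
  0 <= V r P g (softmax (npg_update r P g eta th s a)) s0 - V r P g (softmax th) s0.
Proof.
move=> he.
rewrite (@pdl1 (softmax th) (softmax (npg_update r P g eta th s a))
   (softmax_pol th) (softmax_pol _) s (fun s' Hs' => @npg_same eta th s a s' Hs') s0).
apply: mulr_ge0; first exact: (occ_ge0 (softmax_pol _)).
exact: npg_b_ge0.
Qed.

Variable s_0 : S.

Lemma main_step (mu : S -> R) (astar : S -> A) (eta : R) (th : S -> A -> R)
  (hmu0 : forall s, 0 < mu s) (hmu1 : \sum_s mu s = 1)
  (hopt : forall pol, is_policy pol -> forall s,
     V r P g pol s <= V r P g (det_policy astar) s)
  (he : 0 < eta) :
  eta * (1 - g) ^+ 4 * min_mu mu / (1 + eta)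
       * (dist_mismatch P g mu astar)^-1
       * (min_opt_prob th astar ^+ 2 / #|S|%:R)
       * (Vmu r P g mu (det_policy astar) - Vmu r P g mu (softmax th)) ^+ 2
  <= expected_next_Vmu r P g mu eta th - Vmu r P g mu (softmax th).
Proof.
set pi := softmax th.
have hp : is_policy pi := softmax_pol th.
have hdet : is_policy (det_policy astar : S -> A -> R) := det_pol astar.
set d := dvisit P g mu pi.
set b := fun s a => bcoef (softmax (npg_update r P g eta th s a)) pi s.
set h := fun s => Num.max (Adv th s (astar s)) 0.
set pmin := min_opt_prob th astar.
set mmin := min_mu mu.
set dm := dist_mismatch P g mu astar.
set G := Vmu r P g mu (det_policy astar) - Vmu r P g mu pi.
set K0 := eta * (1 - g) / (1 + eta).
set X := \sum_s d s * h s ^+ 2.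
have hk := g1.
have hd0 : forall s, 0 <= d s := fun s => @dvisit_ge0 mu hmu0 pi hp s.
have hb0 : forall s a, 0 <= b s a := fun s a => @npg_b_ge0 eta th s a he.
have hpmin0 : 0 <= pmin.
  apply: min_ge0 => s; exact: ltW (softmax_gt0 th s (astar s)).
have hpmin1 : pmin <= 1.
  apply: min_le1 => s; rewrite /softmax ler_pdivrMr ?sumexp_gt0 // mul1r.
  rewrite (bigD1 (astar s)) //= lerDl; apply: sumr_ge0 => *; exact: expR_ge0.
have hmmin0 : 0 <= mmin by apply: min_ge0 => s; exact: ltW.
have hK0 : 0 <= K0 by rewrite /K0 divr_ge0 ?mulr_ge0 ?ltW // addr_gt0.
have hX0 : 0 <= X by apply: sumr_ge0 => s _; rewrite mulr_ge0 ?sqr_ge0.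
have L1 : pmin * mmin * K0 * X <=
    expected_next_Vmu r P g mu eta th - Vmu r P g mu pi.
  have E1 : forall c : R, expected_next_Vmu r P g mu eta th - c =
     \sum_s \sum_a d s * pi s a *
        (Vmu r P g mu (softmax (npg_update r P g eta th s a)) - c).
    move=> c.
    have EV : c = \sum_s \sum_a d s * pi s a * c.
      transitivity (\sum_s d s * c).
        by rewrite -mulr_suml dvisit_sum // mul1r.
      apply: eq_bigr => s _; rewrite -mulr_suml -mulr_sumr.
      by case: hp => _ hp1; rewrite hp1 mulr1.
    rewrite {1}EV /expected_next_Vmu -sumrB; apply: eq_bigr => s _.
    by rewrite -sumrB; apply: eq_bigr => a _; rewrite mulrBr.
  rewrite E1.
  have T : forall s a, mu s * b s a <=
      Vmu r P g mu (softmax (npg_update r P g eta th s a)) - Vmu r P g mu pi.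
    move=> s a.
    rewrite (@Vmu_diff1 mu pi (softmax (npg_update r P g eta th s a)) hp
       (softmax_pol _) s (fun s' Hs' => @npg_same eta th s a s' Hs')).
    have hdg := @dvisit_ge mu hmu0 _ (softmax_pol (npg_update r P g eta th s a)) s.
    apply: le_trans (_ : (1 - g)^-1 * ((1 - g) * mu s) * b s a <= _).
      by rewrite mulrA mulVf ?mul1r ?gt_eqF.
    apply: ler_wpM2r; first exact: hb0.
    by apply: ler_wpM2l; [rewrite invr_ge0 ltW | exact: hdg].
  apply: le_trans (_ : \sum_s \sum_a d s * pi s a * (mu s * b s a) <= _); last first.
    apply: ler_sum => s _; apply: ler_sum => a _; apply: ler_wpM2l; last exact: T.
    by rewrite mulr_ge0 // ltW // softmax_gt0.
  apply: le_trans (_ : \sum_s d s * pi s (astar s) * (mu s * b s (astar s)) <= _); last first.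
    apply: ler_sum => s _; rewrite (bigD1 (astar s)) //= lerDl.
    apply: sumr_ge0 => a _; apply: mulr_ge0; first by rewrite mulr_ge0 // ltW // softmax_gt0.
    by rewrite mulr_ge0 // ltW.

  rewrite /X mulr_sumr; apply: ler_sum => s _.
  have hb : K0 * h s ^+ 2 <= b s (astar s).
    rewrite /h /=; case: (lerP 0 (Adv th s (astar s))) => hA.
        have H := @npg_b_lb eta th s (astar s) he hA.
      by rewrite /K0 mulrAC.
    rewrite expr2 !mulr0; exact: hb0.
  have hpi : pmin <= pi s (astar s) by exact: min_le.
  have hmu : mmin <= mu s by exact: min_le.
  have H : pmin * (mmin * (K0 * h s ^+ 2)) <= pi s (astar s) * (mu s * b s (astar s)).
    have hKh : 0 <= K0 * h s ^+ 2 by apply: mulr_ge0 => //; exact: sqr_ge0.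
    apply: ler_pM; [exact: hpmin0 | exact: mulr_ge0 | exact: hpi |].
    apply: ler_pM; [exact: hmmin0 | exact: hKh | exact: hmu | exact: hb].
  have -> : pmin * mmin * K0 * (d s * h s ^+ 2) =
     d s * (pmin * (mmin * (K0 * h s ^+ 2))) by ring.
  by rewrite -mulrA; apply: ler_wpM2l.
have hdm0 : 0 <= dm.
  apply: le_trans (max_ge _ s_0); apply: divr_ge0; last exact: ltW.
  exact: (@dvisit_ge0 mu hmu0 _ hdet).
have C : (1 - g) ^+ 3 * G ^+ 2 <= #|S|%:R * dm * X.
  set ds := dvisit P g mu (det_policy astar).
  have hds0 : forall s, 0 <= ds s := fun s => @dvisit_ge0 mu hmu0 _ hdet s.
  have hdsum : \sum_s ds s = 1 := @dvisit_sum mu hmu1 _ hdet.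
  have hds1 : forall s, ds s <= 1.
    move=> s; rewrite -hdsum (bigD1 s) //= lerDl; exact: sumr_ge0.
  have hG : G = (1 - g)^-1 * \sum_s ds s * Adv th s (astar s).
    rewrite /G (Vmu_diff mu hp hdet); congr (_ * _); apply: eq_bigr => s _.
    by rewrite /bcoef sum_det.
  have hG0 : 0 <= G.
    rewrite /G /Vmu -sumrB; apply: sumr_ge0 => s _; rewrite -mulrBr.
    by apply: mulr_ge0; [exact: ltW | rewrite subr_ge0; exact: hopt].
  set Y := \sum_s ds s * h s.
  have hGY : (1 - g) * G <= Y.
    rewrite hG mulrA mulfV ?gt_eqF // mul1r; apply: ler_sum => s _.
    apply: ler_wpM2l; first exact: hds0.
    by rewrite /h /= le_max lexx.
  have hGY0 : 0 <= (1 - g) * G by rewrite mulr_ge0 // ltW.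
  have hY2 : ((1 - g) * G) ^+ 2 <= Y ^+ 2.
    by rewrite !expr2; apply: ler_pM.
  have hCS := cs_sum (fun s => ds s * h s).
  have hterm : forall s, (ds s * h s) ^+ 2 <= dm * (1 - g)^-1 * (d s * h s ^+ 2).
    move=> s; rewrite exprMn mulrA; apply: ler_wpM2r; first exact: sqr_ge0.
    have e1 : ds s ^+ 2 <= ds s.
      by rewrite expr2 -[X in _ <= X]mul1r; apply: ler_wpM2r; [exact: hds0 | exact: hds1].
    have e2 : ds s <= dm * mu s.
      by rewrite -ler_pdivrMr //; exact: max_ge.
    have e3 : mu s <= (1 - g)^-1 * d s.
      rewrite ler_pdivlMl //; exact: (@dvisit_ge mu hmu0 _ hp s).
    apply: le_trans e1 _; apply: le_trans e2 _.
    rewrite -mulrA; exact: ler_wpM2l.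
  have hsum : \sum_s (ds s * h s) ^+ 2 <= dm * (1 - g)^-1 * X.
    rewrite /X mulr_sumr; apply: ler_sum => s _; exact: hterm.
  have H1 : ((1 - g) * G) ^+ 2 <= #|S|%:R * (dm * (1 - g)^-1 * X).
    apply: le_trans hY2 _; apply: le_trans hCS _.
    apply: ler_wpM2l; [exact: ler0n | exact: hsum].
  have -> : (1 - g) ^+ 3 * G ^+ 2 = (1 - g) * ((1 - g) * G) ^+ 2 by ring.
  have -> : #|S|%:R * dm * X = (1 - g) * (#|S|%:R * (dm * (1 - g)^-1 * X)).
    have : 1 - g != 0 by rewrite gt_eqF.
    by move=> hh; field.
  by apply: ler_wpM2l; [exact: ltW | exact: H1].
have hpm : 0 <= pmin * mmin by exact: mulr_ge0.
have hL0 : 0 <= pmin * mmin * K0 * X.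
  by apply: mulr_ge0; [apply: mulr_ge0; [exact: hpm|exact: hK0]|exact: hX0].
apply: le_trans L1.
case: (eqVneq dm 0) => hdm.
  by rewrite hdm invr0 mulr0 !mul0r.
have hdmp : 0 < dm by rewrite lt0r hdm hdm0.
have hn : 0 < #|S|%:R :> R.
  rewrite ltr0n; apply/card_gt0P; by exists s_0.
set T := (1 - g) ^+ 3 * G ^+ 2 / (dm * #|S|%:R).
have hT : T <= X.
  rewrite /T ler_pdivrMr ?mulr_gt0 //.
  have -> : X * (dm * #|S|%:R) = #|S|%:R * dm * X by ring.
  exact: C.
have hT0 : 0 <= T.
  apply: divr_ge0; last by apply: ltW; rewrite mulr_gt0.
  apply: mulr_ge0; [apply: exprn_ge0; exact: ltW | exact: sqr_ge0].
have -> : eta * (1 - g) ^+ 4 * mmin / (1 + eta) * dm^-1 *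
     (pmin ^+ 2 / #|S|%:R) * G ^+ 2 = K0 * mmin * pmin ^+ 2 * T.
  rewrite /K0 /T.
  have h1 : 1 + eta != 0 by rewrite gt_eqF // addr_gt0.
  have h2 : #|S|%:R != 0 :> R by rewrite gt_eqF.
  by field; rewrite h1 h2 hdm.
have hp2 : pmin ^+ 2 <= pmin.
  by rewrite expr2 -[X in _ <= X]mulr1; apply: ler_wpM2l.
have -> : pmin * mmin * K0 * X = K0 * mmin * pmin * X by ring.
have hKm : 0 <= K0 * mmin by exact: mulr_ge0.
apply: ler_pM; [apply: mulr_ge0; [exact: hKm | exact: sqr_ge0] | exact: hT0 | | exact: hT].
apply: ler_wpM2l; [exact: hKm | exact: hp2].
Qed.

End Dev.

Local Close Scope classical_set_scope.

Theorem lemma3 (R : realType) (S A : finType)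
  (r : S -> A -> R) (P : S -> A -> S -> R) (g : R) (mu : S -> R)
  (astar : S -> A) (eta : R)
  (theta : nat -> S -> A -> R) (st : nat -> S) (at_ : nat -> A) :
  (* finite discounted MDP, rewards in [0,1] *)
  (forall s a, 0 <= r s a <= 1) ->
  (forall s a s', 0 <= P s a s') ->
  (forall s a, \sum_(s' : S) P s a s' = 1) ->
  0 <= g < 1 ->
  (* initial distribution with min_s mu(s) > 0 *)
  (forall s, 0 < mu s) -> \sum_(s : S) mu s = 1 ->
  (* pi* = det_policy astar is an optimal deterministic policy *)
  (forall pol : S -> A -> R, is_policy pol ->
     forall s, V r P g pol s <= V r P g (det_policy astar) s) ->
  (* constant learning rate *)
  0 < eta ->
  (* the iterates of the algorithm: at each t the sample (s_t, a_t) has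
     positive probability under d_mu^{pi_theta_t} x pi_theta_t, and
     theta_{t+1} is the NPG update of theta_t *)
  (forall t, 0 < dvisit P g mu (softmax (theta t)) (st t)
                 * softmax (theta t) (st t) (at_ t)) ->
  (forall t, theta t.+1 = npg_update r P g eta (theta t) (st t) (at_ t)) ->
  forall t, (1 <= t)%N ->
    (forall s0 : S,
       0 <= V r P g (softmax (theta t.+1)) s0 - V r P g (softmax (theta t)) s0)
    /\
    expected_next_Vmu r P g mu eta (theta t)
      - Vmu r P g mu (softmax (theta t))
    >= eta * (1 - g) ^+ 4 * min_mu mu / (1 + eta)
       * (dist_mismatch P g mu astar)^-1
       * (min_opt_prob (theta t) astar ^+ 2 / #|S|%:R)
       * (Vmu r P g mu (det_policy astar) - Vmu r P g mu (softmax (theta t))) ^+ 2.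
Proof.
move=> hr hP0 hP1 hg hmu0 hmu1 hopt he hpos hupd t ht.
split.
  move=> s0; rewrite hupd.
  exact: (@main_mono R S A r P g hr hP0 hP1 hg (at_ 0) eta (theta t) (st t) (at_ t) s0 he).
exact: (@main_step R S A r P g hr hP0 hP1 hg (at_ 0) (st 0) mu astar eta (theta t) hmu0 hmu1 hopt he).
Qed.
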